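(* Let $G=(V,E)$ be a graph and $w\in\mathbb{R}^E$ with $w(E)=\sum_{e\in E}w_e\ge 0$ and $\mathrm{mc}(G,w)>0$. Then $\mathrm{sdp}_{GW}(G,w)\le \kappa(G)\cdot \mathrm{mc}(G,w)$.
   Context: Let $V=[n]$. For $w\in\mathbb{R}^E$, $\mathrm{mc}(G,w)=\max_{x\in\{\pm1\}^n}\frac12\sum_{ij\in E}w_{ij}(1-x_ix_j)$ (max-cut), and $\mathrm{sdp}_{GW}(G,w)=\max_{X\in\mathcal{E}_n}\frac14\langle L_{G,w},X\rangle$, where $\mathcal{E}_n=\{X\succeq 0: X_{ii}=1\}$ and $L_{G,w}$ is the Laplacian matrix with $(i,i)$ entry $\sum_{j:ij\in E}w_{ij}$, $(i,j)$ entry $-w_{ij}$ if $ij\in E$ and $0$ otherwise. With $\mathrm{ip}(G,w)=\max_{x\in\{\pm1\}^n}\sum_{ij\in E}w_{ij}x_ix_j$ and $\mathrm{sdp}(G,w)=\max\sum_{ij\in E}w_{ij}u_i^Tu_j$ over unit vectors $u_i\in\mathbb{R}^n$, the Grothendieck constant is $\kappa(G)=\sup_{w\in\mathbb{R}^E}\mathrm{sdp}(G,w)/\mathrm{ip}(G,w)$. *)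

(* Defs.v *)
From HB Require Import structures.
From mathcomp Require Import all_boot all_order all_algebra.
From mathcomp Require Import all_classical all_reals.
From mathcomp Require Import ereal.
Set Implicit Arguments. Unset Strict Implicit. Unset Printing Implicit Defensive.
Import Order.TTheory GRing.Theory Num.Theory.
Local Open Scope ring_scope.
Local Open Scope classical_set_scope.

Section Defs.
Context {R : realType} {n : nat}.

(* A simple graph on V = 'I_n (= [n]) given by its adjacency relation E;
   an edge ij is represented by the pair (i, j) with i < j.
   A weight vector w in R^E is a function w : 'I_n -> 'I_n -> R of which
   only the values w i j with i < j and E i j are ever used. *)
Definition simple_graph (E : rel 'I_n) : Prop :=
  symmetric E /\ irreflexive E.

Definition edge_sum (E : rel 'I_n) (f : 'I_n -> 'I_n -> R) : R :=
  \sum_(i < n) \sum_(j < n | (i < j)%N && E i j) f i j.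

Definition wtotal (E : rel 'I_n) (w : 'I_n -> 'I_n -> R) : R :=
  edge_sum E w.

Definition pm1 : set ('I_n -> R) := [set x | forall i, x i = 1 \/ x i = -1].

Definition mc (E : rel 'I_n) (w : 'I_n -> 'I_n -> R) : R :=
  sup [set edge_sum E (fun i j => w i j * (1 - x i * x j)) / 2 | x in pm1].

Definition ip (E : rel 'I_n) (w : 'I_n -> 'I_n -> R) : R :=
  sup [set edge_sum E (fun i j => w i j * (x i * x j)) | x in pm1].

Definition unit_rows (U : 'M[R]_n) : Prop :=
  forall i, \sum_(k < n) U i k ^+ 2 = 1.

Definition sdp (E : rel 'I_n) (w : 'I_n -> 'I_n -> R) : R :=
  sup [set edge_sum E (fun i j => w i j * \sum_(k < n) U i k * U j k)
      | U in unit_rows].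

Definition wsym (w : 'I_n -> 'I_n -> R) (i j : 'I_n) : R :=
  if (i < j)%N then w i j else w j i.

Definition laplacian (E : rel 'I_n) (w : 'I_n -> 'I_n -> R) : 'M[R]_n :=
  \matrix_(i < n, j < n)
    if i == j then \sum_(k < n | E i k) wsym w i k
    else if E i j then - wsym w i j else 0.

Definition psd (X : 'M[R]_n) : Prop :=
  X^T = X /\ forall v : 'cV[R]_n, 0 <= (v^T *m X *m v) ord0 ord0.

Definition elliptope : set 'M[R]_n :=
  [set X | psd X /\ forall i, X i i = 1].

Definition frob (A B : 'M[R]_n) : R := \sum_(i < n) \sum_(j < n) A i j * B i j.

Definition sdpGW (E : rel 'I_n) (w : 'I_n -> 'I_n -> R) : R :=
  sup [set frob (laplacian E w) X / 4 | X in elliptope].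

(* Grothendieck constant kappa(G) in the extended reals; the ratio is taken
   over the weights with ip(G,w) > 0 (ip(G,w) = 0 only for w = 0 on E). *)
Definition kappa (E : rel 'I_n) : \bar R :=
  ereal_sup [set ((sdp E w) / (ip E w))%:E
            | w in [set w : 'I_n -> 'I_n -> R | 0 < ip E w]].

End Defs.

(* Main.v *)
Require Import Defs.
From HB Require Import structures.
From mathcomp Require Import all_boot all_order all_algebra.
From mathcomp Require Import all_classical all_reals.
From mathcomp Require Import ereal.
From mathcomp Require Import ring lra.
Import Order.TTheory GRing.Theory Num.Theory.
Local Open Scope ring_scope.
Section Chol.
Context {R : realType} {n : nat}.
Notation I := 'I_n.

Definition delta (k i : I) : R := (i == k)%:R.
Definition Bf (A : I -> I -> R) (u v : I -> R) : R :=
  \sum_i \sum_j u i * A i j * v j.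
Definition psdf (A : I -> I -> R) :=
  (forall i j, A i j = A j i) /\ forall v, 0 <= Bf A v v.

Lemma Bf_addl A u u' v : Bf A (fun i => u i + u' i) v = Bf A u v + Bf A u' v.
Proof.
rewrite /Bf -big_split; apply: eq_bigr => i _; rewrite -big_split.
by apply: eq_bigr => j _ /=; rewrite !mulrDl.
Qed.

Lemma Bf_addr A u v v' : Bf A u (fun i => v i + v' i) = Bf A u v + Bf A u v'.
Proof.
rewrite /Bf -big_split; apply: eq_bigr => i _; rewrite -big_split.
by apply: eq_bigr => j _ /=; rewrite !mulrDr.
Qed.

Lemma Bf_scalel A c u v : Bf A (fun i => c * u i) v = c * Bf A u v.
Proof.
rewrite /Bf mulr_sumr; apply: eq_bigr => i _; rewrite mulr_sumr.
by apply: eq_bigr => j _ /=; rewrite !mulrA.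
Qed.

Lemma Bf_scaler A c u v : Bf A u (fun i => c * v i) = c * Bf A u v.
Proof.
rewrite /Bf mulr_sumr; apply: eq_bigr => i _; rewrite mulr_sumr.
by apply: eq_bigr => j _ /=; rewrite mulrCA.
Qed.

Lemma sum_delta (k : I) (F : I -> R) : \sum_i delta k i * F i = F k.
Proof.
rewrite (bigD1 k) //= /delta eqxx mul1r big1 ?addr0 // => i /negbTE ->.
by rewrite mul0r.
Qed.

Lemma sum_delta' (k : I) (F : I -> R) : \sum_i F i * delta k i = F k.
Proof. by rewrite -[RHS](sum_delta k); apply: eq_bigr => i _; rewrite mulrC. Qed.

Lemma Bf_deltal A k v : Bf A (delta k) v = \sum_j A k j * v j.
Proof.
rewrite /Bf -(sum_delta k (fun i => \sum_j A i j * v j)).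
apply: eq_bigr => i _; rewrite mulr_sumr; apply: eq_bigr => j _; by rewrite mulrA.
Qed.

Lemma Bf_deltar A k u : Bf A u (delta k) = \sum_i u i * A i k.
Proof.
rewrite /Bf; apply: eq_bigr => i _.
by rewrite -(sum_delta' k (fun j => u i * A i j)).
Qed.

Lemma Bf_delta2 A k l : Bf A (delta k) (delta l) = A k l.
Proof. by rewrite Bf_deltal sum_delta'. Qed.

Lemma psdf_diag A k : psdf A -> 0 <= A k k.
Proof. by case=> _ /(_ (delta k)); rewrite Bf_delta2. Qed.

Lemma psdf_row0 B k j : psdf B -> B k k = 0 -> B k j = 0.
Proof.
move=> [Bs Bp] Bkk; apply/eqP; apply: contraT => Hkj.
set t := - (1 + B j j) / (2 * B k j).
have := Bp (fun i => t * delta k i + delta j i).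
rewrite Bf_addl !Bf_addr !Bf_scalel !Bf_scaler !Bf_delta2 Bkk (Bs j k).
match goal with |- is_true (0 <= ?X) -> _ => have -> : X = - 1 end.
  rewrite /t; field; exact: Hkj.
by rewrite oppr_ge0 ler10.
Qed.

Lemma psdf_elim B k : psdf B -> 0 < B k k ->
  psdf (fun i j => B i j - B i k * B k j / B k k).
Proof.
move=> [Bs Bp] pk; split.
  by move=> i j; rewrite (Bs i j) (Bs k j) (Bs i k) [B k i * _]mulrC.
move=> v; set p := B k k; set s := \sum_j B k j * v j.
have := Bp (fun i => v i + (- s / p) * delta k i).
rewrite Bf_addl !Bf_addr !Bf_scalel !Bf_scaler Bf_delta2 Bf_deltal Bf_deltar.
have -> : \sum_i v i * B i k = s.
  by apply: eq_bigr => i _; rewrite Bs mulrC.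
match goal with |- is_true (0 <= ?X) -> _ => have -> : X = Bf B v v - s * s / p end.
  rewrite -/s /p; field; exact: lt0r_neq0.
move=> h; apply: (le_trans h); rewrite le_eqVlt; apply/orP; left; apply/eqP.
have e : s * s / p = \sum_i \sum_j v i * (B i k * B k j / p) * v j.
  rewrite -mulrA {1}/s mulr_suml; apply: eq_bigr => i _.
  rewrite /s mulr_suml mulr_sumr; apply: eq_bigr => j _.
  rewrite (Bs k i); ring.
rewrite e /Bf -sumrB /=; apply: eq_bigr => i _.
rewrite -sumrB; apply: eq_bigr => j _; ring.
Qed.

End Chol.
Section Chol2.
Context {R : realType} {n : nat}.
Notation I := 'I_n.

Lemma chol_iter (A : I -> I -> R) : psdf A -> forall m, (m <= n)%N ->
  exists U B : I -> I -> R, [/\ psdf B,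
    (forall i j, A i j = \sum_l U i l * U j l + B i j),
    (forall i j : I, (i < m)%N -> B i j = 0) &
    (forall i l : I, (m <= l)%N -> U i l = 0)].
Proof.
move=> pA; elim=> [_|m IH lemn].
  exists (fun _ _ => 0), A; split => //.
  by move=> i j; rewrite big1 ?add0r // => l _; rewrite mul0r.
have ltmn : (m < n)%N by [].
have [U [B [pB eA zB zU]]] := IH (ltnW lemn).
pose k : I := Ordinal ltmn.
have pk := psdf_diag B k pB.
have Bsym := pB.1.
case: (eqVneq (B k k) 0) => [Bkk|Bkk].
  exists U, B; split => //.
  - move=> i j; rewrite ltnS leq_eqVlt => /orP [/eqP ei|lt]; last exact: zB.
    have -> : i = k by apply: val_inj.
    exact: psdf_row0.
  - by move=> i l lt; apply: zU; apply: ltnW.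
have p0 : 0 < B k k by rewrite lt_def Bkk.
exists (fun i l => if l == k then B i k / Num.sqrt (B k k) else U i l).
exists (fun i j => B i j - B i k * B k j / B k k); split.
- exact: psdf_elim.
- move=> i j; rewrite eA (bigD1 k) //= [in RHS](bigD1 k) //= eqxx.
  rewrite (zU i k) // mul0r add0r.
  have -> : \sum_(l < n | l != k) (if l == k then B i k / Num.sqrt (B k k) else U i l) *
      (if l == k then B j k / Num.sqrt (B k k) else U j l) =
      \sum_(l < n | l != k) U i l * U j l.
    by apply: eq_bigr => l /negbTE ->.
  have sq : Num.sqrt (B k k) * Num.sqrt (B k k) = B k k.
    by rewrite -expr2 sqr_sqrtr // ltW.
  have sq0 : Num.sqrt (B k k) != 0 by rewrite sqrtr_eq0 -ltNge.
  rewrite (Bsym j k).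
  have -> : B i k / Num.sqrt (B k k) * (B k j / Num.sqrt (B k k)) = B i k * B k j / B k k.
    move: sq sq0; set s := Num.sqrt (B k k) => sq sq0.
    by rewrite -sq; field.
  ring.
- move=> i j; rewrite ltnS leq_eqVlt => /orP [/eqP ei|lt].
    have -> : i = k by apply: val_inj.
    by field.
  by rewrite (zB i j lt) (zB i k lt) !mul0r subr0.
- move=> i l lt; have -> : (l == k) = false.
    by apply/negbTE; apply: contraTneq lt => ->; rewrite /= ltnn.
  by apply: zU; apply: ltnW.
Qed.

Lemma chol (A : I -> I -> R) : psdf A ->
  exists U : I -> I -> R, forall i j, A i j = \sum_l U i l * U j l.
Proof.
move=> pA; have [U [B [_ eA zB _]]] := chol_iter A pA n (leqnn n).
by exists U => i j; rewrite eA zB ?addr0.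
Qed.

End Chol2.
Section Graph.
Context {R : realType} {n : nat} (E : rel 'I_n).
Notation I := 'I_n.

Lemma es_ext (f g : I -> I -> R) :
  (forall i j : I, (i < j)%N -> E i j -> f i j = g i j) -> edge_sum E f = edge_sum E g.
Proof.
move=> h; apply: eq_bigr => i _; apply: eq_bigr => j /andP [a b]; exact: h.
Qed.

Lemma esD (f g : I -> I -> R) :
  edge_sum E (fun i j => f i j + g i j) = edge_sum E f + edge_sum E g.
Proof. rewrite /edge_sum -big_split; apply: eq_bigr => i _; exact: big_split. Qed.

Lemma esZ c (f : I -> I -> R) :
  edge_sum E (fun i j => c * f i j) = c * edge_sum E f.
Proof.
rewrite /edge_sum mulr_sumr; apply: eq_bigr => i _; by rewrite mulr_sumr.
Qed.

Lemma esN (f : I -> I -> R) :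
  edge_sum E (fun i j => - f i j) = - edge_sum E f.
Proof.
rewrite -mulN1r -esZ; apply: es_ext => i j _ _; by rewrite mulN1r.
Qed.

Lemma es_le (f g : I -> I -> R) : (forall i j, f i j <= g i j) ->
  edge_sum E f <= edge_sum E g.
Proof. move=> h; apply: ler_sum => i _; apply: ler_sum => j _; exact: h. Qed.

Lemma es_ub (u f : I -> I -> R) c : (forall i j, `|f i j| <= c) ->
  edge_sum E (fun i j => u i j * f i j) <= edge_sum E (fun i j => `|u i j| * c).
Proof.
move=> h; apply: es_le => i j; apply: le_trans (ler_norm _) _.
by rewrite normrM ler_wpM2l.
Qed.

Lemma es_cols (v : I -> I -> R) (U : I -> I -> R) :
  edge_sum E (fun i j => v i j * \sum_l U i l * U j l) =
  \sum_l edge_sum E (fun i j => v i j * (U i l * U j l)).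
Proof.
rewrite /edge_sum exchange_big /=; apply: eq_bigr => i _.
rewrite exchange_big /=; apply: eq_bigr => j _; by rewrite mulr_sumr.
Qed.

Lemma wsym_sym (w : I -> I -> R) i j : wsym w i j = wsym w j i.
Proof.
rewrite /wsym; case: ltngtP => // h.
by have -> : i = j by apply: val_inj.
Qed.

Lemma pair_sum (g : I -> I -> R) : simple_graph E -> (forall i j, g i j = g j i) ->
  \sum_(i : I) \sum_(j : I | E i j) g i j =
  2 * \sum_(i : I) \sum_(j : I | (i < j)%N && E i j) g i j.
Proof.
move=> [Es Ei] gs.
have h1 : forall i : I, \sum_(j : I | E i j) g i j =
   \sum_(j : I | (i < j)%N && E i j) g i j + \sum_(j : I | (j < i)%N && E i j) g i j.
  move=> i; rewrite (bigID (fun j : I => (i < j)%N)) /=; congr (_ + _).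
    by apply: eq_bigl => j; rewrite andbC.
  apply: eq_bigl => j; rewrite -leqNgt; case Eij: (E i j); rewrite ?andbF ?andbT //.
  rewrite leq_eqVlt; case: eqVneq => [e|//] /=.
  have ij : i = j by apply: val_inj.
  by move: Eij; rewrite ij Ei.
rewrite (eq_bigr _ (fun i _ => h1 i)) big_split /= mulr2n mulrDl mul1r; congr (_ + _).
rewrite (eq_bigr (fun i : I => \sum_(j : I) (if (j < i)%N && E i j then g i j else 0)));
  last by move=> i _; rewrite big_mkcond.
rewrite exchange_big /=; apply: eq_bigr => i _; rewrite [RHS]big_mkcond /=.
by apply: eq_bigr => j _; rewrite (Es j i) gs.
Qed.

Lemma frob_lap (w : I -> I -> R) (X : 'M[R]_n) : simple_graph E ->
  (forall i j, X i j = X j i) -> (forall i, X i i = 1) ->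
  frob (laplacian E w) X =
    2 * wtotal E w - 2 * edge_sum E (fun i j => w i j * X i j).
Proof.
move=> sg Xs Xd; have [Es Ei] := sg.
have hd : \sum_i \sum_(k | E i k) wsym w i k = 2 * wtotal E w.
  rewrite pair_sum //; last exact: wsym_sym.
  congr (_ * _); apply: es_ext => i j ij _; by rewrite /wsym ij.
have ho : \sum_i \sum_(j | E i j) wsym w i j * X i j =
    2 * edge_sum E (fun i j => w i j * X i j).
  rewrite pair_sum //; last by move=> i j; rewrite wsym_sym Xs.
  congr (_ * _); apply: es_ext => i j ij _; by rewrite /wsym ij.
rewrite -hd -ho /frob -sumrB; apply: eq_bigr => i _.
rewrite (bigD1 i) //= /laplacian !mxE eqxx Xd mulr1; congr (_ + _).
rewrite -sumrN [RHS]big_mkcond [RHS](bigD1 i) //= Ei add0r; apply: eq_bigr => j ji.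
rewrite mxE eq_sym (negbTE ji); case: (E i j) => //; by rewrite ?mulNr ?oppr0 ?mul0r.
Qed.

End Graph.
Section Vert.
Context {R : realType} {n : nat} (E : rel 'I_n).
Notation I := 'I_n.
Local Open Scope classical_set_scope.

Definition Sq (v : I -> I -> R) (y : I -> R) : R :=
  edge_sum E (fun i j => v i j * (y i * y j)).

Lemma Sq_ext v y y' : (forall i, y i = y' i) -> Sq v y = Sq v y'.
Proof. move=> h; apply: es_ext => i j _ _; by rewrite !h. Qed.

Definition upd (y : I -> R) (k : I) (t : R) : I -> R :=
  fun i => if i == k then t else y i.

Lemma Sq_affine v y k t : Sq v (upd y k t) =
  (1 + t) / 2 * Sq v (upd y k 1) + (1 - t) / 2 * Sq v (upd y k (-1)).
Proof.
rewrite /Sq -!esZ -esD; apply: es_ext => i j ij _.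
have nij : i != j by apply/eqP => e; rewrite e ltnn in ij.
rewrite /upd; case: (eqVneq i k) => [ik|ik]; case: (eqVneq j k) => [jk|jk].
- by move: nij; rewrite ik jk eqxx.
- by field.
- by field.
- by field.
Qed.

Lemma vertex v y : (forall i, `|y i| <= 1) ->
  exists (x : I -> R), pm1 x /\ Sq v y <= Sq v x.
Proof.
suff claim : forall m y, (forall i, `|y i| <= 1) ->
    (forall i : I, (m <= i)%N -> y i = 1 \/ y i = -1) ->
    exists (x : I -> R), pm1 x /\ Sq v y <= Sq v x.
  by move=> hy; apply: (claim n) => // i; rewrite leqNgt ltn_ord.
elim=> [|m IH] {}y hy hv.
  by exists y; split => // i; exact: hv.
case: (ltnP m n) => [ltmn|lenm]; last first.
  apply: IH => // i; rewrite leqNgt (leq_trans (ltn_ord i) lenm) //.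
pose k : I := Ordinal ltmn.
have hb : forall t, -1 <= t <= 1 -> (forall i, `|upd y k t i| <= 1).
  move=> t ht i; rewrite /upd; case: (i == k) => //; by rewrite ler_norml.
have hv' : forall t, (t = 1 \/ t = -1) ->
    (forall i : I, (m <= i)%N -> upd y k t i = 1 \/ upd y k t i = -1).
  move=> t ht i mi; rewrite /upd; case: eqVneq => [//|ik]; apply: hv.
  rewrite ltn_neqAle mi andbT; apply: contra ik => /eqP e.
  by apply/eqP; apply: val_inj.
have [x1 [p1 l1]] := IH (upd y k 1) (hb 1 ltac:(lra)) (hv' 1 (or_introl erefl)).
have [x2 [p2 l2]] := IH (upd y k (-1)) (hb (-1) ltac:(lra)) (hv' (-1) (or_intror erefl)).
have ey : Sq v y = Sq v (upd y k (y k)).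
  by apply: Sq_ext => i; rewrite /upd; case: eqVneq => // ->.
have := hy k; rewrite ler_norml => /andP [t1 t2].
rewrite ey Sq_affine.
set S1 := Sq v (upd y k 1) in l1 *; set S2 := Sq v (upd y k (-1)) in l2 *.
case: (lerP S2 S1) => h.
  exists x1; split => //; apply: le_trans l1; nra.
exists x2; split => //; apply: le_trans l2; nra.
Qed.

Lemma pm1_norm (x : I -> R) i : pm1 x -> `|x i| = 1.
Proof. by move=> /(_ i) [] ->; rewrite ?normrN normr1. Qed.

Lemma ip_has_ub v : has_ubound [set Sq v x | x in pm1].
Proof.
exists (edge_sum E (fun i j => `|v i j| * 1)) => _ [x px <-].
apply: es_ub => i j; by rewrite normrM !pm1_norm // mulr1.
Qed.

Lemma pm1_1 : @pm1 R n (fun _ => 1).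
Proof. by move=> i; left. Qed.

Lemma ip_ub v (x : I -> R) : pm1 x -> Sq v x <= ip E v.
Proof. by move=> px; apply: (ub_le_sup (ip_has_ub v)); exists x. Qed.

Lemma ip_le v c : (forall x : I -> R, pm1 x -> Sq v x <= c) -> ip E v <= c.
Proof.
move=> h; apply: ge_sup; first by exists (Sq v (fun _ => 1)); exists (fun _ => 1) => //; exact: pm1_1.
by move=> _ [x px <-]; exact: h.
Qed.

Lemma mc_elem w (x : I -> R) : edge_sum E (fun i j => w i j * (1 - x i * x j)) / 2 =
  (wtotal E w - Sq w x) / 2.
Proof.
congr (_ / _); rewrite /Sq /wtotal -esN -esD; apply: es_ext => i j _ _; ring.
Qed.

Lemma mc_ub w (x : I -> R) : pm1 x -> (wtotal E w - Sq w x) / 2 <= mc E w.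
Proof.
move=> px; apply: ub_le_sup; last by exists x => //; rewrite mc_elem.
exists (edge_sum E (fun i j => `|w i j| * 2) / 2) => _ [y py <-].
rewrite ler_pM2r //; apply: es_ub => i j.
apply: le_trans (ler_normB _ _) _; by rewrite normr1 normrM !pm1_norm // mulr1.
Qed.

Lemma mc_le w c : (forall x : I -> R, pm1 x -> (wtotal E w - Sq w x) / 2 <= c) -> mc E w <= c.
Proof.
move=> h; apply: ge_sup.
  by exists ((wtotal E w - Sq w (fun _ => 1)) / 2); exists (fun _ => 1);
    [exact: pm1_1 | rewrite mc_elem].
by move=> _ [x px <-]; rewrite mc_elem; exact: h.
Qed.

Lemma unit_dot (U : 'M[R]_n) i j : unit_rows U -> `|\sum_k U i k * U j k| <= 1.
Proof.
move=> hU; apply: le_trans (ler_norm_sum _ _ _) _.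
have h2 : \sum_k `|U i k * U j k| <= \sum_k (U i k ^+ 2 + U j k ^+ 2) / 2.
  apply: ler_sum => k _; rewrite ler_norml; apply/andP.
  have := sqr_ge0 (U i k - U j k); have := sqr_ge0 (U i k + U j k).
  rewrite !sqrrD !sqrrN; split; lra.
apply: le_trans h2 _.
by rewrite -mulr_suml big_split /= !hU; lra.
Qed.

Lemma sdp_ub (v : I -> I -> R) (U : 'M[R]_n) : unit_rows U ->
  edge_sum E (fun i j => v i j * \sum_k U i k * U j k) <= sdp E v.
Proof.
move=> hU; apply: ub_le_sup; last by exists U.
exists (edge_sum E (fun i j => `|v i j| * 1)) => _ [V hV <-].
apply: es_ub => i j; exact: unit_dot.
Qed.

Lemma ip_le_sdp (v : I -> I -> R) (c : I) : ip E v <= sdp E v.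
Proof.
apply: ip_le => x px.
pose U : 'M[R]_n := \matrix_(i, k) (x i * (k == c)%:R).
have hU : unit_rows U.
  move=> i; rewrite (bigD1 c) //= big1 ?addr0.
    by rewrite mxE eqxx mulr1; have [] := px i => ->; rewrite ?sqrrN expr1n.
  by move=> k /negbTE kc; rewrite mxE kc mulr0 expr0n.
apply: le_trans (sdp_ub v _ hU); rewrite le_eqVlt; apply/orP; left; apply/eqP.
apply: es_ext => i j _ _; congr (_ * _).
rewrite (bigD1 c) //= big1 ?addr0; first by rewrite !mxE eqxx !mulr1.
by move=> k /negbTE kc; rewrite !mxE kc !mulr0.
Qed.

End Vert.
Section Ell.
Context {R : realType} {n : nat}.
Notation I := 'I_n.
Local Open Scope classical_set_scope.

Lemma psd_psdf (X : 'M[R]_n) : psd X -> psdf (fun i j => X i j).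
Proof.
move=> [Xt Xp]; split.
  by move=> i j; rewrite -[in LHS]Xt mxE.
move=> v; have := Xp (\col_i v i).
suff -> : ((\col_i v i)^T *m X *m (\col_i v i)) ord0 ord0 = Bf (fun i j => X i j) v v by [].
rewrite mxE /Bf exchange_big /=; apply: eq_bigr => j _.
rewrite !mxE mulr_suml; apply: eq_bigr => i _; by rewrite !mxE.
Qed.

Lemma ell_factor (X : 'M[R]_n) : elliptope X ->
  exists U : 'M[R]_n, unit_rows U /\ forall i j, X i j = \sum_k U i k * U j k.
Proof.
move=> [pX dX]; have [U hU] := chol _ (psd_psdf X pX).
exists (\matrix_(i, k) U i k); split.
  move=> i; rewrite -(dX i) hU; apply: eq_bigr => k _; by rewrite mxE expr2.
by move=> i j; rewrite hU; apply: eq_bigr => k _; rewrite !mxE.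
Qed.

Lemma ell1 : elliptope (1%:M : 'M[R]_n).
Proof.
split; last by move=> i; rewrite mxE eqxx.
split; first exact: trmx1.
move=> v; rewrite mulmx1 mxE; apply: sumr_ge0 => i _; rewrite mxE -expr2.
exact: sqr_ge0.
Qed.

End Ell.
Lemma sq_le1 {R : realType} {n : nat} (U : 'M[R]_n) i l : unit_rows U -> `|U i l| <= 1.
Proof.
move=> hU; have h : U i l ^+ 2 <= 1.
  rewrite -(hU i) (bigD1 l) //= lerDl; apply: sumr_ge0 => k _; exact: sqr_ge0.
rewrite ler_norml; apply/andP; split; nra.
Qed.

Theorem mainTheorem3 (R : realType) (n : nat) (E : rel 'I_n)
  (w : 'I_n -> 'I_n -> R) :
  simple_graph E -> 0 <= wtotal E w -> 0 < mc E w ->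
  ((sdpGW E w)%:E <= kappa E * (mc E w)%:E)%E.
Proof.
case: n E w => [|n] E w sg W0 mc0.
  exfalso; have : mc E w <= 0.
    apply: mc_le => x _; rewrite /Sq /wtotal /edge_sum !big_ord0; lra.
  lra.
set W := wtotal E w in W0 *.
pose v := fun i j => - w i j.
have Sqv : forall y, Sq E v y = - Sq E w y.
  by move=> y; rewrite /Sq -esN; apply: es_ext => i j _ _; rewrite /v mulNr.
have SqW : Sq E w (fun _ => 1) = W.
  by rewrite /W /wtotal /Sq; apply: es_ext => i j _ _; rewrite !mulr1.
have ipv_le : ip E v <= 2 * mc E w - W.
  apply: ip_le => x px; have := mc_ub E w x px; rewrite Sqv -/W; lra.
have [u0 hu0] : exists u : 'I_n.+1 -> 'I_n.+1 -> R, 0 < ip E u.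
  case: (ltP 0 (ip E v)) => hv; first by exists v.
  exists w; have : mc E w <= W / 2.
    apply: mc_le => x px; have := ip_ub E v x px; rewrite Sqv -/W; lra.
  have := ip_ub E w _ pm1_1; rewrite SqW; lra.
have ratio1 : forall u : 'I_n.+1 -> 'I_n.+1 -> R, 0 < ip E u -> 1 <= sdp E u / ip E u.
  move=> u hu; rewrite ler_pdivlMr // mul1r; exact: (ip_le_sdp E u ord0).
have kge : forall u : 'I_n.+1 -> 'I_n.+1 -> R, 0 < ip E u -> ((sdp E u / ip E u)%:E <= kappa E)%E.
  by move=> u hu; apply: ereal_sup_ubound; exists u.
suff main : forall k : R, (forall u : 'I_n.+1 -> 'I_n.+1 -> R, 0 < ip E u -> sdp E u / ip E u <= k) ->
    sdpGW E w <= k * mc E w.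
  case Kd : (kappa E) => [k| |].
  - rewrite -EFinM lee_fin; apply: main => u hu; have := kge u hu.
    by rewrite Kd lee_fin.
  - by rewrite gt0_mulye ?lte_fin // leey.
  - by have := kge u0 hu0; rewrite Kd leeNy_eq.
move=> k hk.
have k1 : 1 <= k by apply: le_trans (ratio1 u0 hu0) (hk u0 hu0).
apply: ge_sup.
  by exists (frob (laplacian E w) 1%:M / 4); exists 1%:M => //; exact: ell1.
move=> _ [X hX <-].
have [U [hU eX]] := ell_factor X hX.
have Xs : forall i j, X i j = X j i.
  by move=> i j; rewrite !eX; apply: eq_bigr => l _; rewrite mulrC.
rewrite frob_lap //; last by move=> i; exact: hX.2.
set SX := edge_sum E (fun i j => w i j * X i j).
have eSX : - SX = edge_sum E (fun i j => v i j * \sum_k U i k * U j k).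
  by rewrite -esN; apply: es_ext => i j _ _; rewrite eX /v mulNr.
case: (ltP 0 (ip E v)) => hv.
  have h1 : - SX <= sdp E v by rewrite eSX; exact: sdp_ub.
  have h2 : sdp E v <= k * ip E v by rewrite -ler_pdivrMr // hk.
  have h3 : k * ip E v <= k * (2 * mc E w - W) by rewrite ler_wpM2l // (le_trans _ k1).
  have h4 : 0 <= (k - 1) * W by rewrite mulr_ge0 // subr_ge0.
  rewrite -/W; nra.
have h1 : - SX <= 0.
  rewrite eSX es_cols; apply: sumr_le0 => l _.
  have [x [px hx]] := vertex E v (fun i => U i l) (fun i => sq_le1 U i l hU).
  apply: le_trans hx _; apply: le_trans hv; exact: ip_ub.
have h2 : W / 2 <= mc E w.
  have [x [px hx]] := vertex E v (fun _ => 0) (fun i => ltac:(by rewrite normr0)).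
  have e0 : Sq E v (fun _ => 0) = 0.
    by rewrite /Sq /edge_sum big1 // => i _; rewrite big1 // => j _; rewrite !mul0r mulr0.
  have := mc_ub E w x px; move: hx; rewrite e0 Sqv -/W; lra.
have h3 : 0 <= (k - 1) * mc E w by rewrite mulr_ge0 // ?subr_ge0 // ltW.
rewrite -/W; nra.
Qed.
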